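(* Let $q$ be a prime power with $q\ge 2s$, and let $1\le t_i\le t_o\le s$. Then there exists a linear $(t_i,t_o,s,q)$-AONT.
   Context: A linear $(t_i,t_o,s,q)$-AONT is given by an invertible $s\times s$ matrix $M$ over $\mathbb{F}_q$ defining the map $\mathbf{x}\mapsto\mathbf{y}=\mathbf{x}M^{-1}$ on row vectors of $\mathbb{F}_q^s$, such that for every set $I$ of $t_i$ input coordinates and every set $J$ of $s-t_o$ output coordinates, the pair $((x_i)_{i\in I},(y_j)_{j\in J})$ takes every value in $\mathbb{F}_q^{t_i+s-t_o}$ equally often as $\mathbf{x}$ ranges over $\mathbb{F}_q^s$. Equivalently, $M$ is invertible and every $t_o\times t_i$ submatrix of $M$ has rank $t_i$. *)

(* Defs.v *)
From mathcomp Require Import all_boot all_algebra all_field.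
Set Implicit Arguments. Unset Strict Implicit. Unset Printing Implicit Defensive.
Import GRing.Theory.
Local Open Scope ring_scope.

(* A linear (ti,to,s,q)-AONT over the finite field F (q = #|F|):
   M invertible, and the map x |-> y = x M^{-1} on row vectors of F^s is such
   that for every choice of ti input coordinates (given by an injective
   f : 'I_ti -> 'I_s) and s - to output coordinates (injective g), the pair
   ((x_i)_{i in I}, (y_j)_{j in J}) takes every value equally often as x ranges
   over F^s. *)
Definition aont_count (F : finFieldType) (ti to s : nat) (M : 'M[F]_s)
    (f : 'I_ti -> 'I_s) (g : 'I_(s - to) -> 'I_s)
    (a : 'rV[F]_ti) (b : 'rV[F]_(s - to)) : nat :=
  #|[set x : 'rV[F]_s | (colsub f x == a) && (colsub g (x *m invmx M) == b)]|.

Definition linear_AONT (F : finFieldType) (ti to s : nat) (M : 'M[F]_s) : Prop :=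
  M \in unitmx /\
  forall (f : 'I_ti -> 'I_s) (g : 'I_(s - to) -> 'I_s),
    injective f -> injective g ->
    forall a a' b b',
      aont_count M f g a b = aont_count M f g a' b'.

(* Main.v *)
Require Import Defs.
From mathcomp Require Import all_boot all_algebra all_field.
From mathcomp Require Import zify ring.
Set Implicit Arguments. Unset Strict Implicit. Unset Printing Implicit Defensive.
Import GRing.Theory.
Local Open Scope ring_scope.

Lemma cauchy_ker (F : fieldType) n (w : 'I_n -> F) (c : 'I_n -> F) (zs : seq F) :
  injective w -> uniq zs -> (n <= size zs)%N ->
  (forall z k, z \in zs -> z != w k) ->
  (forall z, z \in zs -> \sum_k c k / (z - w k) = 0) -> forall k, c k = 0.
Proof.
move=> winj uzs nzs zw hz.
pose Qk k := \prod_(l | l != k) ('X - (w l)%:P).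
pose P := \sum_k c k *: Qk k.
have sQk k : (size (Qk k) <= n)%N.
  rewrite /Qk size_prod; last by move=> i _; rewrite polyXsubC_eq0.
  under eq_bigr do rewrite size_XsubC.
  rewrite sum_nat_const cardC1 card_ord.
  have := ltn_ord k; lia.
have sP : (size P <= n)%N.
  apply: (leq_trans (size_sum _ _ _)).
  apply/bigmax_leqP => k _.
  exact: leq_trans (size_scale_leq _ _) (sQk k).
have P0 : P = 0.
  apply/eqP; apply: contraT => nP.
  have := max_poly_roots nP _ uzs.
  have -> : all (root P) zs.
    apply/allP => z zin; rewrite /root.
    have -> : P.[z] = (\prod_l (z - w l)) * \sum_k c k / (z - w k).
      rewrite /P horner_sum mulr_sumr; apply: eq_bigr => k _.
      rewrite hornerZ /Qk horner_prod [in RHS](bigD1 k) //=.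
      under eq_bigr do rewrite hornerXsubC.
      have : z - w k != 0 by rewrite subr_eq0 zw.
      move=> nz; field; exact: nz.
    by rewrite hz // mulr0.
  by move=> /(_ isT); rewrite ltnNge (leq_trans sP nzs).
move=> k.
have : P.[w k] = 0 by rewrite P0 horner0.
rewrite /P horner_sum (bigD1 k) //= big1; last first.
  move=> k' nk'; rewrite hornerZ /Qk horner_prod (bigD1 k) 1?eq_sym //=.
  by rewrite hornerXsubC subrr mul0r mulr0.
rewrite addr0 hornerZ => /eqP; rewrite mulf_eq0 => /orP [/eqP //|].
rewrite /Qk horner_prod; move/prodf_eq0 => [l nl].
by rewrite hornerXsubC subr_eq0 => /eqP /winj lk; rewrite lk eqxx in nl.
Qed.

Lemma row_free_ker (F : fieldType) m n (A : 'M[F]_(m, n)) :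
  (forall u : 'rV_m, u *m A = 0 -> u = 0) -> row_free A.
Proof.
move=> H; rewrite -kermx_eq0; apply/eqP/matrixP => i j.
have := H (row i (kermx A)); rewrite -row_mul mulmx_ker row0 => /(_ erefl) h.
by have := congr1 (fun v : 'rV_m => v 0 j) h; rewrite !mxE.
Qed.

Lemma eq_row_mxb (R : eqType) m n1 n2 (A1 B1 : 'M[R]_(m, n1)) (A2 B2 : 'M[R]_(m, n2)) :
  (row_mx A1 A2 == row_mx B1 B2) = (A1 == B1) && (A2 == B2).
Proof.
by apply/eqP/andP => [/eq_row_mx [-> ->]|[/eqP-> /eqP->]].
Qed.

Theorem mainTheorem10 (F : finFieldType) (s ti to : nat) :
  (2 * s <= #|F|)%N -> (1 <= ti)%N -> (ti <= to)%N -> (to <= s)%N ->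
  exists M : 'M[F]_s, linear_AONT ti to M.
Proof.
move=> h2s hti hito htos.
pose el (k : nat) : F := nth 0 (enum F) k.
have elinj k l : (k < #|F|)%N -> (l < #|F|)%N -> el k = el l -> k = l.
  move=> hk hl /eqP; rewrite /el nth_uniq ?enum_uniq -?cardT //; by move/eqP.
pose xs (i : 'I_s) := el i.
pose ys (j : 'I_s) := el (s + j).
have xsinj : injective xs.
  move=> i j e; apply/val_inj; apply: (elinj _ _ _ _ e);
    have := ltn_ord i; have := ltn_ord j; lia.
have ysinj : injective ys.
  move=> i j e; apply/val_inj; apply/eqP; rewrite -(eqn_add2l s); apply/eqP;
    apply: (elinj _ _ _ _ e); have := ltn_ord i; have := ltn_ord j; lia.
have xy i j : xs i != ys j.
  apply/eqP => e; have := ltn_ord i; have := ltn_ord j.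
  have : (i < #|F|)%N by have := ltn_ord i; lia.
  have : (s + j < #|F|)%N by have := ltn_ord j; lia.
  move=> h1 h2; have := elinj _ _ h2 h1 e; lia.
pose M := \matrix_(i < s, j < s) (xs i - ys j)^-1.
have Munit : M \in unitmx.
  rewrite -row_free_unit; apply: row_free_ker => u uM.
  have u0 : forall i, u 0 i = 0.
    apply: (@cauchy_ker _ s xs (fun i => u 0 i) (map ys (enum 'I_s))) => //.
    - by rewrite map_inj_uniq ?enum_uniq.
    - by rewrite size_map size_enum_ord.
    - by move=> z k /mapP [j _ ->]; rewrite eq_sym xy.
    move=> z /mapP [j _ ->].
    have := congr1 (fun v : 'rV_s => v 0 j) uM; rewrite !mxE => h.
    rewrite -[RHS]oppr0 -[in RHS]h -sumrN; apply: eq_bigr => i _.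
    by rewrite mxE -mulrN -invrN opprB.
  by apply/matrixP => i j; rewrite ord1 u0 mxE.
exists M; split => // f g finj ginj.
pose N := row_mx (colsub f (1%:M : 'M[F]_s)) (colsub g (invmx M)).
have NE x : x *m N = row_mx (colsub f x) (colsub g (x *m invmx M)).
  by rewrite mul_mx_row !mulmx_colsub mulmx1.
pose P := row_mx (colsub f M) (colsub g (1%:M : 'M[F]_s)).
have MN : M *m N = P by rewrite NE mulmxV.
have Pfull : row_full P.
  rewrite /row_full -mxrank_tr; apply: row_free_ker => u uP.
  have Pl i k : P i (lshift (s - to) k) = (xs i - ys (f k))^-1.
    by rewrite /P row_mxEl !mxE.
  have Pr i k : P i (rshift ti k) = (i == g k)%:R.
    by rewrite /P row_mxEr !mxE.
  have ent i : \sum_(k < ti) u 0 (lshift _ k) * (xs i - ys (f k))^-1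
             + \sum_(k < s - to) u 0 (rshift _ k) * (i == g k)%:R = 0.
    have := congr1 (fun v : 'rV_s => v 0 i) uP; rewrite !mxE big_split_ord /=.
    by under eq_bigr do rewrite mxE Pl; under [X in _ + X]eq_bigr do rewrite mxE Pr.
  pose G := g @: [set: 'I_(s - to)].
  have cl k : u 0 (lshift _ k) = 0.
    apply: (@cauchy_ker _ ti (fun k => ys (f k)) (fun k => u 0 (lshift _ k))
              (map xs (enum (~: G)))) => //.
    - by move=> a b /ysinj /finj.
    - by rewrite map_inj_uniq ?enum_uniq.
    - rewrite size_map -cardE cardsCs setCK /G card_imset // cardsT !card_ord; lia.
    - by move=> z k' /mapP [j _ ->]; rewrite xy.
    move=> z /mapP [i]; rewrite mem_enum inE => iG ->.
    have := ent i; rewrite [X in _ + X]big1 ?addr0 //.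
    move=> k' _; have [ig|nig] := eqVneq i (g k'); last by rewrite mulr0.
    by rewrite ig imset_f ?inE in iG.
  have cr k : u 0 (rshift _ k) = 0.
    have := ent (g k); rewrite big1 ?add0r; last by move=> k' _; rewrite cl mul0r.
    rewrite (bigD1 k) //= eqxx mulr1 big1 ?addr0 //.
    by move=> k' nk; rewrite (inj_eq ginj) eq_sym (negbTE nk) mulr0.
  rewrite -[u]hsubmxK.
  have -> : lsubmx u = 0 by apply/matrixP => i j; rewrite ord1 !mxE cl.
  have -> : rsubmx u = 0 by apply/matrixP => i j; rewrite ord1 !mxE cr.
  by rewrite row_mx0.
have surj t : exists x, x *m N = t.
  have /submxP [D ->] := submx_full t Pfull.
  by exists (D *m M); rewrite -mulmxA MN.
have cnt a b : aont_count M f g a b = #|[set x : 'rV[F]_s | x *m N == 0]|.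
  have [x0 hx0] := surj 1%N (row_mx a b).
  rewrite /aont_count.
  have -> : [set x : 'rV[F]_s | (colsub f x == a) && (colsub g (x *m invmx M) == b)]
          = [set x | x *m N == row_mx a b].
    by apply/setP => x; rewrite !inE NE eq_row_mxb.
  rewrite -(card_preimset _ (addIr x0)); apply: eq_card => x.
  rewrite !inE mulmxDl hx0.
  by apply/eqP/eqP => [/(canRL (addrK _)) ->|->]; rewrite ?subrr ?add0r.
move=> a a' b b'; rewrite (cnt a b) (cnt a' b'); reflexivity.
Qed.
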